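(* For every $n\ge 0$ there is a UFA with $n$ states such that both its forward determinization and its backward determinization have at least $\frac12\sqrt{n+1}\cdot 2^{n/2}$ states.
   Context: A UFA is an NFA $(Q,\Sigma,\delta,I,F)$ (finite states $Q$, finite alphabet $\Sigma$, transitions $\delta\subseteq Q\times\Sigma\times Q$, initial states $I$, accepting states $F$) in which every word has at most one accepting run (run from a state of $I$ to a state of $F$). For $S\subseteq Q$, $w\in\Sigma^*$: $\delta(S,w)=\{r\mid\exists q\in S.\ q\xrightarrow{w}r\}$, $\delta^{-1}(w,S)=\{r\mid \exists q\in S.\ r\xrightarrow{w} q\}$. The forward determinization has state set $\{\delta(I,w)\mid w\in\Sigma^*\}$; the backward determinization has state set $\{\delta^{-1}(w,F)\mid w\in\Sigma^*\}$. *)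

(* Defs.v *)
From mathcomp Require Import all_boot.
From mathcomp Require Import boolp.
Set Implicit Arguments. Unset Strict Implicit. Unset Printing Implicit Defensive.

Record nfa (Q S : finType) := NFA {
  trans : Q -> S -> Q -> bool;
  init : {set Q};
  final : {set Q} }.

Section Auto.
Variables (Q S : finType) (A : nfa Q S).

(* run_from q w r : r = [q1;...;qk] is the sequence of states visited after q
   when reading w = [a1;...;ak], i.e. q -a1-> q1 -a2-> ... -ak-> qk. *)
Fixpoint run_from (q : Q) (w : seq S) (r : seq Q) : bool :=
  match w, r with
  | [::], [::] => true
  | a :: w', q' :: r' => trans A q a q' && run_from q' w' r'
  | _, _ => false
  end.

Definition accepting_run (w : seq S) (q0 : Q) (r : seq Q) : bool :=
  [&& q0 \in init A, run_from q0 w r & last q0 r \in final A].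

Definition is_UFA : Prop :=
  forall w q0 r q0' r', accepting_run w q0 r -> accepting_run w q0' r' ->
    q0 = q0' /\ r = r'.

Definition delta_fw (X : {set Q}) (w : seq S) : {set Q} :=
  foldl (fun (Y : {set Q}) a => [set p | [exists q in Y, trans A q a p]]) X w.

Definition delta_bw (w : seq S) (X : {set Q}) : {set Q} :=
  foldr (fun a (Y : {set Q}) => [set p | [exists q in Y, trans A p a q]]) X w.

Definition fw_det_states : {set {set Q}} :=
  [set X | `[< exists w : seq S, X = delta_fw (init A) w >]].
Definition bw_det_states : {set {set Q}} :=
  [set X | `[< exists w : seq S, X = delta_bw w (final A) >]].
End Auto.

(* Main.v *)
Require Import Defs.
From mathcomp Require Import all_boot.
From mathcomp Require Import boolp.
From mathcomp Require Import zify ring.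
Set Implicit Arguments. Unset Strict Implicit. Unset Printing Implicit Defensive.

Section Constr.
Variables (n : nat) (Y : {set 'I_n}).

Definition famF (S : {set 'I_n}) : bool := #|S :&: Y| <= 1.
Definition famB (T : {set 'I_n}) : bool := (T \subset Y) || (#|T| <= 1).
Definition Iz : {set 'I_n} := [set j | val j == 0].

Definition Aut : nfa 'I_n ({set 'I_n} * {set 'I_n})%type :=
  @NFA _ _ (fun a (l : {set 'I_n} * {set 'I_n}) b =>
     [&& famB l.1, famF l.2, a \in l.1 & b \in l.2]) Iz Iz.

Lemma cross S T x y : famF S -> famB T -> x \in S -> x \in T -> y \in S -> y \in T -> x = y.
Proof.
rewrite /famF /famB => hS /orP [hT|hT] xS xT yS yT.
- move/card_le1_eqP: hS; apply; rewrite inE ?xS ?yS; [exact: (subsetP hT) | exact: (subsetP hT)].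
- by move/card_le1_eqP: hT; apply.
Qed.

Lemma Iz_le1 : #|Iz| <= 1.
Proof. apply/card_le1_eqP => x y; rewrite !inE => /eqP hx /eqP hy; apply: val_inj; by rewrite hx hy. Qed.

Lemma IzF : famF Iz.
Proof. rewrite /famF; exact: leq_trans (subset_leq_card (subsetIl _ _)) Iz_le1. Qed.

Lemma IzB : famB Iz.
Proof. by rewrite /famB Iz_le1 orbT. Qed.

Lemma runs_uniq w : forall q q' r r' V, famF V -> q \in V -> q' \in V ->
  run_from Aut q w r -> run_from Aut q' w r' ->
  last q r \in final Aut -> last q' r' \in final Aut -> q = q' /\ r = r'.
Proof.
elim: w => [|[U V1] w IH] q q' r r' V hV qV q'V.
- case: r => // ; case: r' => // _ _ /= h1 h2; split => //.
  exact: (cross hV IzB qV h1 q'V h2).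
- case: r => // s rr; case: r' => // s' rr' /= /andP [/and4P [hU hV1 qU sV1] h1] /andP [/and4P [_ _ q'U s'V1] h2] l1 l2.
  have eqq := cross hV hU qV qU q'V q'U.
  have [es err] := IH s s' rr rr' V1 hV1 sV1 s'V1 h1 h2 l1 l2.
  by rewrite eqq es err.
Qed.

Lemma Aut_UFA : is_UFA Aut.
Proof.
move=> w q0 r q0' r' /and3P [h1 h2 h3] /and3P [h1' h2' h3'].
exact: (runs_uniq IzF h1 h1' h2 h2' h3 h3').
Qed.
End Constr.

Section C2.
Variables (n : nat) (Y : {set 'I_n}) (x0 : 'I_n) (hx0 : x0 \in Iz n).

Lemma fw_sub : [set S | famF Y S] \subset fw_det_states (Aut Y).
Proof.
apply/subsetP => S; rewrite !inE => hS; apply/asboolP.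
exists [:: ([set x0], S)]; rewrite /delta_fw /=; apply/setP => p; rewrite inE.
apply/idP/existsP => [hp|[q /andP [qI /and4P [_ _ _ ->]]]] //.
exists x0; rewrite hx0 /= hS inE eqxx hp andbT /famB /= cards1 orbT //.
Qed.

Lemma bw_sub : [set T | famB Y T] \subset bw_det_states (Aut Y).
Proof.
apply/subsetP => T; rewrite !inE => hT; apply/asboolP.
exists [:: (T, [set x0])]; rewrite /delta_bw /=; apply/setP => p; rewrite inE.
apply/idP/existsP => [hp|[q /andP [qI /and4P [_ _ -> _]]]] //.
exists x0; rewrite hx0 /= hT inE eqxx hp /famF /=.
by rewrite (leq_trans (subset_leq_card (subsetIl _ _))) // cards1.
Qed.

Lemma bw_card : 2 ^ #|Y| <= #|bw_det_states (Aut Y)|.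
Proof.
rewrite -card_powerset; apply: leq_trans (subset_leq_card bw_sub).
apply: subset_leq_card; apply/subsetP => T; rewrite !inE /famB => ->; done.
Qed.

Definition oset (o : option 'I_n) : {set 'I_n} := if o is Some j then [set j] else set0.
Definition hh (x : {set 'I_n} * option 'I_n) : {set 'I_n} := x.1 :|: oset x.2.
Definition P : {set option 'I_n} := None |: (Some @: Y).
Definition D := setX (powerset (~: Y)) P.

Lemma osetY o : o \in P -> oset o \subset Y.
Proof.
rewrite !inE; case/orP => [/eqP -> |/imsetP [j jY ->]] /=; first exact: sub0set.
by rewrite sub1set.
Qed.

Lemma hhY x : x \in D -> hh x :&: Y = oset x.2.
Proof.
case: x => A o; rewrite inE /= powersetE => /andP [hA ho].
rewrite /hh /= setIUl (setIidPl (osetY ho)).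
have -> : A :&: Y = set0.
  apply/setP => j; rewrite !inE; apply/negP => /andP [jA jY].
  by move: (subsetP hA j jA); rewrite inE jY.
by rewrite set0U.
Qed.

Lemma hhX x : x \in D -> hh x :&: ~: Y = x.1.
Proof.
case: x => A o; rewrite inE /= powersetE => /andP [hA ho].
rewrite /hh /= setIUl (setIidPl hA).
have -> : oset o :&: ~: Y = set0.
  apply/setP => j; rewrite !inE; apply/negP => /andP [jA jY].
  by move: (subsetP (osetY ho) j jA); rewrite (negbTE jY).
by rewrite setU0.
Qed.

Lemma oset_inj : injective oset.
Proof.
case=> [j|] [k|] //= h.
- by move/setP: h => /(_ j); rewrite !inE eqxx eq_sym => /esym/eqP ->.
- by move/setP: h => /(_ j); rewrite !inE eqxx.
- by move/setP: h => /(_ k); rewrite !inE eqxx.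
Qed.

Lemma fw_card : 2 ^ #|~: Y| * (#|Y|.+1) <= #|fw_det_states (Aut Y)|.
Proof.
have cP : #|P| = #|Y|.+1.
  rewrite /P cardsU1 card_imset; last exact: Some_inj.
  by have -> : (None \notin Some @: Y) by apply/imsetP => [[j _]].
rewrite -cP -card_powerset -cardsX -/D -(card_in_imset (f := hh)); last first.
  move=> [A o] [A' o'] hD hD' e.
  have e1 := hhX hD; have e2 := hhX hD'; rewrite e in e1; rewrite e1 in e2.
  have f1 := hhY hD; have f2 := hhY hD'; rewrite e in f1; rewrite f1 in f2.
  by rewrite /= in e2 f2; rewrite e2 (oset_inj f2).
apply: leq_trans (subset_leq_card fw_sub).
apply: subset_leq_card; apply/subsetP => S /imsetP [x xD ->]; rewrite inE /famF hhY //.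
by case: x.2 => [j|] /=; rewrite ?cards1 ?cards0.
Qed.
End C2.

Definition Hyp n k := (n+1)*2^n <= 4*k^2.
Definition C1 n q := (n+1)*2^n <= 4 * (2^q)^2.
Lemma expn_pow a b : expn a b = Nat.pow a b.
Proof. elim: b => // b IH; by rewrite expnS /= IH. Qed.

Lemma C1n n : C1 n n.
Proof.
rewrite /C1; have := ltn_expl n (isT : 1 < 2); move: (2^n) => G; nia.
Qed.

Lemma choose_q n : exists q, [/\ q <= n, Hyp n (2^q) & Hyp n (2^(n-q)*q.+1)].
Proof.
have ex : exists q, C1 n q by exists n; exact: C1n.
case: (ex_minnP ex) => q hq hmin.
have hqn : q <= n by apply: hmin; exact: C1n.
exists q; rewrite /Hyp; split => //.
have hG : 0 < 2^n by rewrite expn_gt0.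
have E : 2^(n-q) * 2^q = 2^n by rewrite -expnD subnK.
have hn : n < q.*2.+2.
  case: n {ex hmin hqn E} hq hG => [|m] hq hG; first by [].
  rewrite -(ltn_exp2l _ _ (isT : 1 < 2)).
  move: hq; rewrite /C1 -expnM !expnS mulnA.
  have -> : q * 2 = q.*2 by rewrite muln2.
  move: (2^m.+1) hG (2^q.*2) => G hG H; nia.
case: q hq hmin hqn E hn => [|q] hq hmin hqn E hn.
- rewrite /C1 expn0 subn0 in hq *.
  move: hq; move: (2^n) hG => G hG; nia.
- have nC : ~~ C1 n q by apply/negP => /hmin; rewrite ltnn.
  rewrite /C1 -ltnNge in nC.
  move: nC E hn; rewrite /C1 [2^q.+1]expnS.
  move: (2^n) (2^(n - q.+1)) (2^q) hG => G F H hG nC E hn.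
  have hH : 0 < (2*H)^2.
    rewrite expn_gt0 muln_gt0 /=; case: H nC E => // nC E.
    by move: E hG; rewrite muln0 muln0 => <-.
  rewrite -(leq_pmul2r hH).
  have h1 : (n+1)*G * ((2*H)^2) <= (n+1)*G*((n+1)*G).
    rewrite leq_mul2l; apply/orP; right.
    have -> : (2*H)^2 = 4 * H^2 by ring.
    exact: ltnW.
  apply: (leq_trans h1).
  have -> : 4 * (F * q.+2) ^ 2 * ((2 * H) ^ 2) = (2 * q.+2)^2 * (G * G) * 1.
    rewrite -E; ring.
  have h2 : (n+1)^2 <= (2 * q.+2)^2 by rewrite leq_exp2r //; lia.
  have : (n + 1) * G * ((n + 1) * G) = (n+1)^2 * (G*G) * 1 by ring.
  move=> ->; apply: leq_mul => //; exact: leq_mul.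
Qed.
Lemma cardY n q : q <= n -> #|[set j : 'I_n | j < q]| = q.
Proof.
move=> hq.
have -> : [set j : 'I_n | j < q] = [set widen_ord hq i | i : 'I_q].
  apply/setP => j; rewrite inE; apply/idP/imsetP => [hj|[i _ ->]] //=.
  by exists (Ordinal hj) => //; apply: val_inj.
by rewrite card_imset ?card_ord //; by move=> a b /(congr1 val) /= /val_inj.
Qed.

From Stdlib Require Import Reals Lra.

Lemma real_bound n k : Hyp n k ->
  (/ 2 * sqrt (INR (n + 1)) * Rpower 2 (INR n / 2) <= INR k)%R.
Proof.
rewrite /Hyp -!multE -plusE !expn_pow.
move=> /leP /le_INR h.
have p2 : (0 < 2 ^ n)%R by apply: pow_lt; lra.
have -> : Rpower 2 (INR n / 2) = sqrt (2 ^ n).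
  by rewrite /Rdiv -Rpower_mult Rpower_pow ?Rpower_sqrt //; lra.
rewrite Rmult_assoc -sqrt_mult; [|exact: pos_INR|lra].
have -> : INR k = (/2 * sqrt (4 * INR k ^ 2))%R.
  rewrite (_ : (4 * INR k ^ 2 = (2 * INR k) * (2 * INR k))%R); last by ring.
  rewrite sqrt_square; first field.
  have := pos_INR k; lra.
apply: Rmult_le_compat_l; first lra.
apply: sqrt_le_1_alt.
move: h; rewrite !mult_INR !pow_INR.
have -> : INR 2 = 2%R by [].
have -> : INR 4 = 4%R by rewrite /INR; ring.
have -> : INR 1 = 1%R by [].
move=> h; apply: (Rle_trans _ _ _ h); right; ring.
Qed.

Theorem proposition3 (n : nat) :
  exists (S : finType) (A : nfa 'I_n S),
    is_UFA A /\
    (/ 2 * sqrt (INR (n + 1)) * Rpower 2 (INR n / 2) <= INR #|fw_det_states A|)%R /\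
    (/ 2 * sqrt (INR (n + 1)) * Rpower 2 (INR n / 2) <= INR #|bw_det_states A|)%R.
Proof.
case: n => [|m].
  exists ({set 'I_0} * {set 'I_0})%type, (Aut set0); split; first exact: Aut_UFA.
  have h1 : Hyp 0 1 by [].
  have b := real_bound h1.
  split; apply: (Rle_trans _ _ _ b); apply: le_INR; apply/leP; rewrite card_gt0;
    apply/set0Pn; exists (Iz 0); rewrite inE; apply/asboolP; by exists [::].
have [q [hqn C1q C2q]] := choose_q m.+1.
set Y := [set j : 'I_m.+1 | j < q].
have cY : #|Y| = q by exact: cardY.
have cCY : #|~: Y| = m.+1 - q by move: (cardsC Y); rewrite card_ord cY; lia.
have x0 : (ord0 : 'I_m.+1) \in Iz m.+1 by rewrite inE.
exists ({set 'I_m.+1} * {set 'I_m.+1})%type, (Aut Y); split; first exact: Aut_UFA.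
split.
- apply: (Rle_trans _ _ _ (real_bound C2q)); apply: le_INR; apply/leP.
  by have := fw_card Y x0; rewrite cCY cY.
- apply: (Rle_trans _ _ _ (real_bound C1q)); apply: le_INR; apply/leP.
  by have := bw_card Y x0; rewrite cY.
Qed.
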